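(* Let $p$ be a prime, $n$ a positive integer, and $t$ a real number with $1\le t\le p$. For $A\in GL(n,\mathbf{Q}_p)$ let $\|A\|=\max_{j,k}|a_{j,k}|_p$, $r(A)=\max(\|A-I\|,\|A^{-1}-I\|)$ and $r'(A)=\min(r(A),t)$. Then $r'(I)=0$, $r'(A)>0$ for $A\neq I$, $r'(A^{-1})=r'(A)$, and $r'(AB)\le\max(r'(A),r'(B))$ for all $A,B\in GL(n,\mathbf{Q}_p)$. Consequently $r'(B^{-1}A)$ is a left-invariant ultrametric and $r'(AB^{-1})$ a right-invariant ultrametric on $GL(n,\mathbf{Q}_p)$, each determining the standard topology; and for $A,B\in GL(n,\mathbf{Z}_p)$ one has $r'(B^{-1}A)=\|A-B\|$.
   Context: $GL(n,\mathbf{Q}_p)$ is the group of invertible $n\times n$ matrices over $\mathbf{Q}_p$ with topology induced from $M_n(\mathbf{Q}_p)\cong\mathbf{Q}_p^{n^2}$; $GL(n,\mathbf{Z}_p)=\{A\in M_n(\mathbf{Z}_p): |\det A|_p=1\}$. *)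

(* Defs.v *)
(* Such (K, v) is exactly (a copy of) the completion Q_p of (Q, |.|_p). *)
From HB Require Import structures.
From mathcomp Require Import all_boot all_order all_algebra.
From mathcomp Require Import reals.
Set Implicit Arguments. Unset Strict Implicit. Unset Printing Implicit Defensive.
Import Order.TTheory GRing.Theory Num.Theory.
Local Open Scope ring_scope.

Record is_Qp (p : nat) (R : realType) (K : fieldType) (v : K -> R) : Prop := {
  Qp_abs_ge0 : forall x, 0 <= v x;
  Qp_abs_eq0 : forall x, v x = 0 <-> x = 0;
  Qp_absM : forall x y, v (x * y) = v x * v y;
  Qp_abs_ultra : forall x y, v (x + y) <= Num.max (v x) (v y);
  Qp_abs_p : v (p%:R) = (p%:R)^-1;
  Qp_complete : forall u : nat -> K,
    (forall eps : R, 0 < eps -> exists N : nat, forall m k : nat,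
        (N <= m)%N -> (N <= k)%N -> v (u m - u k) < eps) ->
    exists l : K, forall eps : R, 0 < eps -> exists N : nat, forall m : nat,
        (N <= m)%N -> v (u m - l) < eps;
  Qp_Q_dense : forall (x : K) (eps : R), 0 < eps ->
    exists q : rat, v (x - ratr q) < eps
}.

Section Defs.
Variables (R : realType) (K : fieldType) (v : K -> R) (n : nat).

Definition mxnorm (A : 'M[K]_n) : R :=
  \big[Num.max/0]_(j < n) \big[Num.max/0]_(k < n) v (A j k).

Definition rmx (A : 'M[K]_n) : R :=
  Num.max (mxnorm (A - 1%:M)) (mxnorm (invmx A - 1%:M)).

Definition rmx' (t : R) (A : 'M[K]_n) : R := Num.min (rmx A) t.

Definition GLZp (A : 'M[K]_n) : Prop :=
  (forall j k, v (A j k) <= 1) /\ v (\det A) = 1.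

Definition ultrametric_GL (d : 'M[K]_n -> 'M[K]_n -> R) : Prop :=
  (forall A B, A \in unitmx -> B \in unitmx -> 0 <= d A B) /\
  (forall A, A \in unitmx -> d A A = 0) /\
  (forall A B, A \in unitmx -> B \in unitmx -> d A B = 0 -> A = B) /\
  (forall A B, A \in unitmx -> B \in unitmx -> d A B = d B A) /\
  (forall A B C, A \in unitmx -> B \in unitmx -> C \in unitmx ->
     d A C <= Num.max (d A B) (d B C)).

(* the metric d induces on GL(n,K) the topology induced from
   M_n(K) = K^(n^2) (product topology = topology of the sup norm) *)
Definition standard_topology_GL (d : 'M[K]_n -> 'M[K]_n -> R) : Prop :=
  forall U : 'M[K]_n -> Prop,
    (forall A, A \in unitmx -> U A -> exists2 eps : R, 0 < eps &
        forall B, B \in unitmx -> d A B < eps -> U B) <->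
    (forall A, A \in unitmx -> U A -> exists2 eps : R, 0 < eps &
        forall B, B \in unitmx -> mxnorm (B - A) < eps -> U B).

End Defs.

(* Main.v *)
Require Import Defs.
From HB Require Import structures.
From mathcomp Require Import all_boot all_order all_algebra.
From mathcomp Require Import reals ring lra.
Import Order.TTheory GRing.Theory Num.Theory.
Local Open Scope ring_scope.
Set Implicit Arguments. Unset Strict Implicit.

Section Val.
Variables (p : nat) (R : realType) (K : fieldType) (v : K -> R).
Hypothesis Hp : prime p.
Hypothesis Hv : is_Qp p v.

Lemma v0 : v 0 = 0. Proof. by apply/(Qp_abs_eq0 Hv). Qed.
Lemma v1 : v 1 = 1.
Proof.
have h := Qp_absM Hv 1 1. rewrite mulr1 in h.
have hn : v 1 != 0 by apply/eqP => /(Qp_abs_eq0 Hv) /eqP; rewrite oner_eq0.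
by apply: (mulfI hn); rewrite mulr1 -h.
Qed.
Lemma vN1 : v (-1) = 1.
Proof.
have h := Qp_absM Hv (-1) (-1). rewrite mulrNN mulr1 v1 in h.
have h0 := Qp_abs_ge0 Hv (-1).
nra.
Qed.
Lemma vN x : v (- x) = v x.
Proof. by rewrite -mulN1r (Qp_absM Hv) vN1 mul1r. Qed.
Lemma vV x : v (x^-1) = (v x)^-1.
Proof.
have [->|xn0] := eqVneq x 0; first by rewrite invr0 v0 invr0.
have h : v x * v x^-1 = 1 by rewrite -(Qp_absM Hv) mulfV // v1.
have vn : v x != 0 by apply/eqP => /(Qp_abs_eq0 Hv) /eqP; rewrite (negPf xn0).
by apply: (mulfI vn); rewrite h mulfV.
Qed.
Lemma vD_le x y c : v x <= c -> v y <= c -> v (x + y) <= c.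
Proof. move=> hx hy; apply: le_trans (Qp_abs_ultra Hv x y) _; by rewrite ge_max hx hy. Qed.

Lemma vsum_le (I : Type) (r : seq I) (P : pred I) (F : I -> K) c :
  0 <= c -> (forall i, P i -> v (F i) <= c) -> v (\sum_(i <- r | P i) F i) <= c.
Proof.
move=> c0 h; elim/big_ind: _ => //; first by rewrite v0.
by move=> x y; apply: vD_le.
Qed.

Lemma vnat_le1 m : v m%:R <= 1.
Proof.
elim: m => [|m IH]; first by rewrite v0.
by rewrite -addn1 natrD; apply: vD_le => //; rewrite v1.
Qed.

Lemma p_gt1 : (1 < p)%N. Proof. exact: prime_gt1. Qed.
Lemma pR_gt1 : 1 < p%:R :> R. Proof. by rewrite ltr1n p_gt1. Qed.
Lemma pinv_lt1 : (p%:R : R)^-1 < 1.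
Proof. by rewrite invf_lt1 ?pR_gt1 // (lt_trans ltr01 pR_gt1). Qed.

Lemma vcoprime m : coprime p m -> v m%:R = 1.
Proof.
move=> cpm; apply/le_anti; rewrite vnat_le1 /=.
have [a _ ha] := Bezoutl m (prime_gt0 Hp).
rewrite (eqP cpm) in ha. case/dvdnP: ha => c hc.
have hK : (1 : K) = c%:R * p%:R - a%:R * m%:R by rewrite -!natrM -hc natrD addrK.
have : v 1 <= Num.max (v (c%:R * p%:R)) (v (- (a%:R * m%:R))).
  by rewrite {1}hK; apply: (Qp_abs_ultra Hv).
rewrite v1 vN !(Qp_absM Hv) (Qp_abs_p Hv) le_max => /orP[h|h].
  have h2 : v c%:R * (p%:R)^-1 <= (p%:R)^-1.
    apply: ler_piMl; first by rewrite invr_ge0 ler0n. exact: vnat_le1.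
  by have := le_lt_trans (le_trans h h2) pinv_lt1; rewrite ltxx.
apply: le_trans h _; apply: ler_piMl; first exact: (Qp_abs_ge0 Hv). exact: vnat_le1.
Qed.

Lemma vnat_pow m : (0 < m)%N -> exists k : nat, v m%:R = ((p ^ k)%:R)^-1.
Proof.
elim: m {-2}m (leqnn m) => [|N IH] m hm m0; first by case: m hm m0.
have [dv|ndv] := boolP (p %| m)%N.
  have hm' : m = (m %/ p * p)%N by rewrite divnK.
  have q0 : (0 < m %/ p)%N by rewrite divn_gt0 ?prime_gt0 // dvdn_leq.
  have [|k hk] := IH (m %/ p)%N _ q0.
    rewrite -ltnS; apply: leq_trans hm; rewrite ltn_Pdiv ?p_gt1 //.
  exists k.+1; rewrite hm' natrM (Qp_absM Hv) hk (Qp_abs_p Hv) expnSr natrM invfM //.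
exists 0%N; rewrite expn0 invr1; apply: vcoprime.
by rewrite prime_coprime.
Qed.

Lemma vint (z : int) : v (z%:~R) = v ((`|z|%N)%:R).
Proof. by case: z => m //=; rewrite NegzE mulrNz vN. Qed.

Lemma vint_pow (z : int) : z != 0 -> exists k : nat, v (z%:~R) = ((p ^ k)%:R)^-1.
Proof. by move=> z0; rewrite vint; apply: vnat_pow; rewrite absz_gt0. Qed.

Lemma vrat_disc (q : rat) : v (ratr q) < p%:R -> v (ratr q) <= 1.
Proof.
have [->|q0] := eqVneq q 0; first by rewrite /ratr (_ : numq 0 = 0) // mul0r v0.
rewrite /ratr (Qp_absM Hv) vV.
have nq : numq q != 0 by rewrite numq_eq0.
have [ka ->] := vint_pow nq.
have [kb ->] := vint_pow (denq_neq0 q).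
rewrite invrK.
have P0 : forall k, (0 : R) < (p ^ k)%:R by move=> k; rewrite ltr0n expn_gt0 prime_gt0.
rewrite mulrC ltr_pdivrMr // ler_pdivrMr // mul1r -natrM ltr_nat ler_nat -expnS.
rewrite ltn_exp2l ?p_gt1 // ltnS => h; by rewrite leq_exp2l ?p_gt1.
Qed.

Lemma v_disc (x : K) : v x < p%:R -> v x <= 1.
Proof.
have [->|x0] := eqVneq x 0; first by rewrite v0.
have vx0 : 0 < v x.
  by rewrite lt0r (Qp_abs_ge0 Hv) andbT; apply/eqP => /(Qp_abs_eq0 Hv) /eqP; rewrite (negPf x0).
have [q hq] := Qp_Q_dense Hv x vx0.
have e : v (ratr q) = v x.
  apply/le_anti/andP; split.
    have -> : ratr q = x - (x - ratr q) :> K by ring.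
    apply: le_trans (Qp_abs_ultra Hv _ _) _; rewrite vN ge_max lexx; exact: ltW.
  have := Qp_abs_ultra Hv (x - ratr q) (ratr q); rewrite subrK le_max.
  by case/orP => // h; have := lt_le_trans hq h; rewrite ltxx.
by rewrite -e; apply: vrat_disc; rewrite e.
Qed.

Section Norm.
Variable n : nat.
Local Notation N := (@mxnorm R K v n).

Lemma mxnorm_ge0 (A : 'M[K]_n) : 0 <= N A.
Proof.
rewrite /mxnorm; elim/big_ind: _ => //; first by move=> x y hx hy /=; rewrite le_max hx.
move=> j _; elim/big_ind: _ => //; first by move=> x y hx hy /=; rewrite le_max hx.
by move=> k _; apply: (Qp_abs_ge0 Hv).
Qed.

Lemma le_mxnorm (A : 'M[K]_n) j k : v (A j k) <= N A.
Proof.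
rewrite /mxnorm; apply: le_trans (le_bigmax _ _ j).
exact: (le_bigmax _ (fun k => v (A j k)) k).
Qed.

Lemma mxnorm_le (A : 'M[K]_n) c : 0 <= c -> (forall j k, v (A j k) <= c) -> N A <= c.
Proof. by move=> c0 h; apply: bigmax_le => // j _; apply: bigmax_le. Qed.

Lemma mxnorm_lt (A : 'M[K]_n) c : 0 < c -> (forall j k, v (A j k) < c) -> N A < c.
Proof. by move=> c0 h; apply: bigmax_lt => // j _; apply: bigmax_lt. Qed.

Lemma mxnorm0 : N 0 = 0.
Proof. by apply/le_anti; rewrite mxnorm_ge0 mxnorm_le // => j k; rewrite mxE v0. Qed.

Lemma mxnorm_eq0 (A : 'M[K]_n) : N A = 0 -> A = 0.
Proof.
move=> h; apply/matrixP => j k; rewrite mxE; apply/(Qp_abs_eq0 Hv)/le_anti.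
by rewrite (Qp_abs_ge0 Hv) -h le_mxnorm.
Qed.

Lemma mxnorm_gt0 (A : 'M[K]_n) : A != 0 -> 0 < N A.
Proof.
move=> A0; rewrite lt0r mxnorm_ge0 andbT; apply/eqP => /mxnorm_eq0 h.
by rewrite h eqxx in A0.
Qed.

Lemma mxnormD (A B : 'M[K]_n) : N (A + B) <= Num.max (N A) (N B).
Proof.
apply: mxnorm_le => [|j k]; first by rewrite le_max mxnorm_ge0.
rewrite mxE; apply: le_trans (Qp_abs_ultra Hv _ _) _.
by rewrite ge_max !le_max !le_mxnorm /= orbT.
Qed.

Lemma mxnormN_le (A : 'M[K]_n) : N (- A) <= N A.
Proof. by apply: mxnorm_le (mxnorm_ge0 _) _ => j k; rewrite mxE vN le_mxnorm. Qed.

Lemma mxnormN (A : 'M[K]_n) : N (- A) = N A.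
Proof. by apply/le_anti; rewrite mxnormN_le /= -[X in N X <= _]opprK mxnormN_le. Qed.

Lemma mxnormB (A B : 'M[K]_n) : N (A - B) = N (B - A).
Proof. by rewrite -mxnormN opprB. Qed.

Lemma mxnormM (A B : 'M[K]_n) : N (A *m B) <= N A * N B.
Proof.
apply: mxnorm_le => [|j k]; first by rewrite mulr_ge0 ?mxnorm_ge0.
rewrite mxE; apply: vsum_le => [|i _]; first by rewrite mulr_ge0 ?mxnorm_ge0.
rewrite (Qp_absM Hv); apply: ler_pM; rewrite ?(Qp_abs_ge0 Hv) ?le_mxnorm //.
Qed.

Lemma mxnorm_disc (A : 'M[K]_n) : N A < p%:R -> N A <= 1.
Proof.
move=> h; apply: mxnorm_le => // j k; apply: v_disc.
exact: le_lt_trans (le_mxnorm _ _ _) h.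
Qed.
Lemma vsign (k : nat) : v ((-1) ^+ k) = 1.
Proof. by elim: k => [|k IH]; rewrite ?expr0 ?v1 // exprS (Qp_absM Hv) vN1 mul1r. Qed.

Lemma vprod_le1 (I : Type) (r : seq I) (P : pred I) (F : I -> K) :
  (forall i, P i -> v (F i) <= 1) -> v (\prod_(i <- r | P i) F i) <= 1.
Proof.
move=> h; elim/big_ind: _ => //; first by rewrite v1.
move=> x y hx hy; rewrite (Qp_absM Hv); apply: mulr_ile1 => //; exact: (Qp_abs_ge0 Hv).
Qed.

Lemma vdet_le1 m (A : 'M[K]_m) : (forall j k, v (A j k) <= 1) -> v (\det A) <= 1.
Proof.
move=> h; rewrite /determinant; apply: vsum_le => // s _.
rewrite (Qp_absM Hv) vsign mul1r; exact: vprod_le1.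
Qed.

Lemma GLZp_unit (A : 'M[K]_n) : GLZp v A -> A \in unitmx.
Proof.
case=> _ hd; rewrite unitmxE unitfE; apply/eqP => h0.
by move: hd; rewrite h0 v0 => /eqP; rewrite eq_sym oner_eq0.
Qed.

Lemma GLZp_inv_le1 (A : 'M[K]_n) : GLZp v A -> N (invmx A) <= 1.
Proof.
move=> hA; have hu := GLZp_unit hA; case: hA => he hd.
apply: mxnorm_le => // j k; rewrite /invmx hu !mxE (Qp_absM Hv) vV hd invr1 mul1r.
rewrite /cofactor (Qp_absM Hv) vsign mul1r; apply: vdet_le1 => a b; rewrite !mxE; exact: he.
Qed.

Lemma GLZp_le1 (A : 'M[K]_n) : GLZp v A -> N A <= 1.
Proof. by case=> he _; apply: mxnorm_le. Qed.
End Norm.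

Lemma id1 (S : pzRingType) (x y : S) : x * y - 1 = (x - 1) + (y - 1) + (x - 1) * (y - 1).
Proof. rewrite mulrBl !mulrBr !mulr1 mul1r. move: (x * y) => z.
rewrite -addrA (addrC (y - 1)) subrK (addrC (x - 1)) addrA subrK //. Qed.

Lemma id2 (S : pzRingType) (e f : S) : (1 + e) * (1 + f) = 1 -> f = - e - e * f.
Proof. rewrite mulrDl !mul1r mulrDr mulr1 => h.
have h0 : f + (e + e * f) = 0 by apply: (addrI 1); rewrite addrA h addr0.
by apply/eqP; rewrite -opprD -addr_eq0 h0.
Qed.

Lemma lt_scale (c m : R) : 0 <= c -> 0 < m -> c * (m / (c + 1)) < m.
Proof.
move=> c0 m0; have c1 : 0 < c + 1 by rewrite ltr_wpDl.
rewrite mulrA ltr_pdivrMr // mulrC ltr_pM2l //; by rewrite ltrDl.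
Qed.

Lemma scale_gt0 (c m : R) : 0 <= c -> 0 < m -> 0 < m / (c + 1).
Proof. by move=> c0 m0; rewrite divr_gt0 // ltr_wpDl. Qed.

Section Main.
Variables (n' : nat) (t : R).
Hypotheses (ht1 : 1 <= t) (htp : t <= p%:R).
Local Notation M := ('M[K]_n'.+1).
Local Notation N := (@mxnorm R K v n'.+1).
Local Notation r := (@rmx R K v n'.+1).
Local Notation r' := (@rmx' R K v n'.+1 t).

Lemma invmxM (A B : M) : A \in unitmx -> B \in unitmx -> invmx (A *m B) = invmx B *m invmx A.
Proof. move=> hA hB; exact: (@invrM M A B hA hB). Qed.

Lemma t_gt0 : 0 < t. Proof. exact: lt_le_trans ltr01 ht1. Qed.

Lemma r_ge0 (A : M) : 0 <= r A.
Proof. by rewrite /rmx le_max mxnorm_ge0. Qed.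

Lemma r'_ge0 (A : M) : 0 <= r' A.
Proof. by rewrite /rmx' le_min r_ge0 (le_trans ler01 ht1). Qed.

Lemma r'_le_t (A : M) : r' A <= t.
Proof. by rewrite /rmx' ge_min lexx orbT. Qed.

Lemma r'_le_r (A : M) : r' A <= r A.
Proof. by rewrite /rmx' ge_min lexx. Qed.

Lemma r'1 : r' 1%:M = 0.
Proof.
rewrite /rmx' /rmx invmx1 subrr mxnorm0 maxxx min_l //.
exact: le_trans ler01 ht1.
Qed.

Lemma r'_gt0 (A : M) : A != 1%:M -> 0 < r' A.
Proof.
move=> h; rewrite /rmx' lt_min t_gt0 andbT /rmx lt_max mxnorm_gt0 //.
by rewrite subr_eq0.
Qed.

Lemma r'_inv (A : M) : r' (invmx A) = r' A.
Proof. by rewrite /rmx' /rmx invmxK maxC. Qed.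

Lemma r'_small (A : M) del : del <= t -> r' A < del -> N (A - 1%:M) < del /\ N (invmx A - 1%:M) < del.
Proof.
move=> dt; rewrite /rmx' gt_min => /orP[|h]; last by have := lt_le_trans h dt; rewrite ltxx.
by rewrite /rmx gt_max => /andP[].
Qed.

Lemma key3 (X Y : M) : N X <= 1 -> N Y <= 1 -> N (X + Y + X *m Y) <= Num.max (N X) (N Y).
Proof.
move=> hX hY; apply: le_trans (mxnormD _ _) _; rewrite ge_max; apply/andP; split.
  exact: mxnormD.
apply: le_trans (mxnormM _ _) _; rewrite le_max; apply/orP; left.
by apply: ler_piMr => //; apply: mxnorm_ge0.
Qed.

Lemma r'_mul (A B : M) : A \in unitmx -> B \in unitmx -> r' (A *m B) <= Num.max (r' A) (r' B).
Proof.
move=> hA hB; have [h|h] := leP t (Num.max (r' A) (r' B)).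
  exact: le_trans (r'_le_t _) h.
move: h; rewrite gt_max => /andP[hAt hBt].
have rl : forall C : M, r' C < t -> r' C = r C /\ N (C - 1%:M) <= 1 /\ N (invmx C - 1%:M) <= 1.
  move=> C; rewrite /rmx' gt_min ltxx orbF => hC; split; first by rewrite min_l // ltW.
  move: (lt_le_trans hC htp); rewrite /rmx gt_max => /andP[h1 h2].
  by split; apply: mxnorm_disc.
have [eA [hA1 hA2]] := rl A hAt; have [eB [hB1 hB2]] := rl B hBt.
rewrite eA eB; apply: le_trans (r'_le_r _) _.
rewrite /rmx ge_max; apply/andP; split.
  have -> : A *m B - 1%:M = (A - 1%:M) + (B - 1%:M) + (A - 1%:M) *m (B - 1%:M) := id1 A B.
  apply: le_trans (key3 hA1 hB1) _; rewrite /rmx ge_max !le_max !lexx /=.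
  by rewrite orbT.
rewrite invmxM //.
have -> : invmx B *m invmx A - 1%:M = (invmx B - 1%:M) + (invmx A - 1%:M) + (invmx B - 1%:M) *m (invmx A - 1%:M) := id1 (invmx B) (invmx A).
apply: le_trans (key3 hB2 hA2) _; rewrite /rmx ge_max !le_max !lexx /=.
by rewrite !orbT.
Qed.

Lemma inv_small (E F : M) : (1 + E) * (1 + F) = 1 -> N E < 1 -> N F <= N E.
Proof.
move=> h hE; have eF := id2 h.
have hle : N F <= Num.max (N E) (N E * N F).
  rewrite {1}eF; apply: le_trans (mxnormD _ _) _; rewrite !mxnormN.
  by rewrite ge_max !le_max lexx /= (mxnormM E F) orbT.
rewrite leNgt; apply/negP => hlt.
have F0 : 0 < N F := le_lt_trans (mxnorm_ge0 _) hlt.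
move: hle; rewrite le_max leNgt hlt /=.
have : N E * N F < N F by rewrite gtr_pMl.
by move=> h1 h2; have := lt_le_trans h1 h2; rewrite ltxx.
Qed.

Lemma topo_of (d : M -> M -> R) :
 (forall (A : M) eps, A \in unitmx -> 0 < eps -> exists2 del, 0 < del &
    forall B, B \in unitmx -> d A B < del -> N (B - A) < eps) ->
 (forall (A : M) eps, A \in unitmx -> 0 < eps -> exists2 del, 0 < del &
    forall B, B \in unitmx -> N (B - A) < del -> d A B < eps) ->
 standard_topology_GL v d.
Proof.
move=> h1 h2 U; split => hU A Au UA; have [eps e0 he] := hU A Au UA.
  have [del d0 hd] := h2 A eps Au e0; exists del => // B Bu hB; exact: he Bu (hd B Bu hB).
have [del d0 hd] := h1 A eps Au e0; exists del => // B Bu hB; exact: he Bu (hd B Bu hB).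
Qed.

Lemma ultra_of (d : M -> M -> R) (f : M -> M -> M) :
  (forall A B, d A B = r' (f A B)) ->
  (forall A, A \in unitmx -> f A A = 1%:M) ->
  (forall A B, A \in unitmx -> B \in unitmx -> f A B = 1%:M -> A = B) ->
  (forall A B, A \in unitmx -> B \in unitmx -> f B A = invmx (f A B)) ->
  (forall A B, A \in unitmx -> B \in unitmx -> f A B \in unitmx) ->
  (forall A B C, A \in unitmx -> B \in unitmx -> C \in unitmx ->
      (f A C = f B C *m f A B) \/ (f A C = f A B *m f B C)) ->
  ultrametric_GL d.
Proof.
move=> hd hf1 hf0 hfs hfu hft; split; first by move=> A B _ _; rewrite hd r'_ge0.
split; first by move=> A Au; rewrite hd hf1 // r'1.
split.
  move=> A B Au Bu; rewrite hd => h0; apply: hf0 => //; apply/eqP; apply/negP => h.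
  by have := r'_gt0 (introN idP h); rewrite h0 ltxx.
split; first by move=> A B Au Bu; rewrite !hd hfs // r'_inv.
move=> A B C Au Bu Cu; rewrite !hd.
case: (hft A B C Au Bu Cu) => ->; apply: le_trans (r'_mul _ _) _; rewrite ?hfu //.
by rewrite maxC.
Qed.

Lemma left_unit (A B : M) : A \in unitmx -> B \in unitmx -> invmx B *m A \in unitmx.
Proof. by move=> Au Bu; rewrite unitmx_mul unitmx_inv Au Bu. Qed.

Lemma right_unit (A B : M) : A \in unitmx -> B \in unitmx -> A *m invmx B \in unitmx.
Proof. by move=> Au Bu; rewrite unitmx_mul unitmx_inv Au Bu. Qed.

Lemma left_ultra : ultrametric_GL (fun A B : M => r' (invmx B *m A)).
Proof.
apply: (@ultra_of _ (fun A B => invmx B *m A)) => //.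
- by move=> A Au; rewrite mulVmx.
- by move=> A B Au Bu h; rewrite -(mulKVmx Bu A) h mulmx1.
- by move=> A B Au Bu; rewrite invmxM ?invmxK // ?unitmx_inv.
- exact: left_unit.
- by move=> A B C Au Bu Cu; left; rewrite -mulmxA mulKVmx.
Qed.

Lemma right_ultra : ultrametric_GL (fun A B : M => r' (A *m invmx B)).
Proof.
apply: (@ultra_of _ (fun A B => A *m invmx B)) => //.
- by move=> A Au; rewrite mulmxV.
- by move=> A B Au Bu h; rewrite -(mulmxKV Bu A) h mul1mx.
- by move=> A B Au Bu; rewrite invmxM ?invmxK // ?unitmx_inv.
- exact: right_unit.
- by move=> A B C Au Bu Cu; right; rewrite mulmxA mulmxKV.
Qed.

Lemma left_inv (A B C : M) : A \in unitmx -> B \in unitmx -> C \in unitmx ->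
     r' (invmx (C *m B) *m (C *m A)) = r' (invmx B *m A).
Proof. by move=> Au Bu Cu; rewrite invmxM // -mulmxA mulKmx. Qed.

Lemma right_inv (A B C : M) : A \in unitmx -> B \in unitmx -> C \in unitmx ->
     r' ((A *m C) *m invmx (B *m C)) = r' (A *m invmx B).
Proof. by move=> Au Bu Cu; rewrite invmxM // -mulmxA mulKVmx. Qed.

Lemma left_topo : standard_topology_GL v (fun A B : M => r' (invmx B *m A)).
Proof.
apply: topo_of.
  move=> A eps Au e0; set c := N A.
  have c0 : 0 <= c := mxnorm_ge0 A.
  exists (Num.min 1 (eps / (c + 1))); first by rewrite lt_min ltr01 scale_gt0.
  move=> B Bu hd.
  have dt : Num.min 1 (eps / (c + 1)) <= t by rewrite ge_min ht1.
  have [_ h2] := r'_small dt hd.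
  rewrite invmxM ?unitmx_inv // invmxK in h2.
  have -> : B - A = A *m (invmx A *m B - 1%:M) by rewrite mulmxBr mulKVmx // mulmx1.
  apply: le_lt_trans (mxnormM _ _) _; apply: le_lt_trans (lt_scale c0 e0).
  apply: ler_wpM2l => //; apply: ltW; apply: lt_le_trans h2 _; by rewrite ge_min lexx orbT.
move=> A eps Au e0; set c := N (invmx A).
have c0 : 0 <= c := mxnorm_ge0 _.
set m := Num.min 1 eps.
have m0 : 0 < m by rewrite lt_min ltr01.
exists (m / (c + 1)); first exact: scale_gt0.
move=> B Bu hB.
set E := invmx A *m B - 1%:M.
have hE : N E < m.
  rewrite /E (_ : invmx A *m B - 1%:M = invmx A *m (B - A)); last by rewrite mulmxBr mulVmx.
  apply: le_lt_trans (mxnormM _ _) _; apply: le_lt_trans (lt_scale c0 m0).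
  by apply: ler_wpM2l => //; apply: ltW.
set F := invmx B *m A - 1%:M.
have hEF : (1 + E) * (1 + F) = 1.
  rewrite /E /F !(addrC 1) !subrK.
  change (invmx A *m B *m (invmx B *m A) = 1%:M).
  by rewrite -mulmxA mulKVmx // mulVmx.
have hE1 : N E < 1 by apply: lt_le_trans hE _; rewrite ge_min lexx.
have hF := inv_small hEF hE1.
have hEe : N E < eps by apply: lt_le_trans hE _; rewrite ge_min lexx orbT.
apply: le_lt_trans (r'_le_r _) _; rewrite /rmx gt_max.
rewrite invmxM ?unitmx_inv // invmxK -/E hEe andbT.
exact: le_lt_trans hF hEe.
Qed.

Lemma right_topo : standard_topology_GL v (fun A B : M => r' (A *m invmx B)).
Proof.
apply: topo_of.
  move=> A eps Au e0; set c := N A.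
  have c0 : 0 <= c := mxnorm_ge0 A.
  exists (Num.min 1 (eps / (c + 1))); first by rewrite lt_min ltr01 scale_gt0.
  move=> B Bu hd.
  have dt : Num.min 1 (eps / (c + 1)) <= t by rewrite ge_min ht1.
  have [_ h2] := r'_small dt hd.
  rewrite invmxM ?unitmx_inv // invmxK in h2.
  have -> : B - A = (B *m invmx A - 1%:M) *m A by rewrite mulmxBl mulmxKV // mul1mx.
  apply: le_lt_trans (mxnormM _ _) _; rewrite mulrC; apply: le_lt_trans (lt_scale c0 e0).
  apply: ler_wpM2l => //; apply: ltW; apply: lt_le_trans h2 _; by rewrite ge_min lexx orbT.
move=> A eps Au e0; set c := N (invmx A).
have c0 : 0 <= c := mxnorm_ge0 _.
set m := Num.min 1 eps.
have m0 : 0 < m by rewrite lt_min ltr01.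
exists (m / (c + 1)); first exact: scale_gt0.
move=> B Bu hB.
set E := B *m invmx A - 1%:M.
have hE : N E < m.
  rewrite /E (_ : B *m invmx A - 1%:M = (B - A) *m invmx A); last by rewrite mulmxBl mulmxV.
  apply: le_lt_trans (mxnormM _ _) _; rewrite mulrC; apply: le_lt_trans (lt_scale c0 m0).
  by apply: ler_wpM2l => //; apply: ltW.
set F := A *m invmx B - 1%:M.
have hEF : (1 + E) * (1 + F) = 1.
  rewrite /E /F !(addrC 1) !subrK.
  change (B *m invmx A *m (A *m invmx B) = 1%:M).
  by rewrite -mulmxA mulKmx // mulmxV.
have hE1 : N E < 1 by apply: lt_le_trans hE _; rewrite ge_min lexx.
have hF := inv_small hEF hE1.
have hEe : N E < eps by apply: lt_le_trans hE _; rewrite ge_min lexx orbT.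
apply: le_lt_trans (r'_le_r _) _; rewrite /rmx gt_max.
rewrite invmxM ?unitmx_inv // invmxK -/E hEe andbT.
exact: le_lt_trans hF hEe.
Qed.

Lemma glzp_norm (A B : M) : GLZp v A -> GLZp v B -> N (invmx B *m A - 1%:M) = N (A - B).
Proof.
move=> hA hB; have Bu := GLZp_unit hB.
apply/le_anti/andP; split.
  rewrite (_ : invmx B *m A - 1%:M = invmx B *m (A - B)); last by rewrite mulmxBr mulVmx.
  apply: le_trans (mxnormM _ _) _; exact: ler_piMl (mxnorm_ge0 _) (GLZp_inv_le1 hB).
rewrite {1}(_ : A - B = B *m (invmx B *m A - 1%:M)); last by rewrite mulmxBr mulKVmx // mulmx1.
apply: le_trans (mxnormM _ _) _; exact: ler_piMl (mxnorm_ge0 _) (GLZp_le1 hB).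
Qed.

Lemma glzp (A B : M) : GLZp v A -> GLZp v B -> r' (invmx B *m A) = N (A - B).
Proof.
move=> hA hB; have Au := GLZp_unit hA; have Bu := GLZp_unit hB.
rewrite /rmx' /rmx glzp_norm // invmxM ?unitmx_inv // invmxK glzp_norm //.
rewrite (mxnormB B A) maxxx min_l //; apply: le_trans ht1.
apply: le_trans (mxnormD _ _) _; by rewrite mxnormN ge_max !GLZp_le1.
Qed.
End Main.
End Val.

Unset Implicit Arguments.
Theorem mainTheorem8 (p : nat) (R : realType) (K : fieldType) (v : K -> R)
  (n : nat) (t : R) :
  prime p -> is_Qp p v -> (0 < n)%N -> 1 <= t -> t <= p%:R ->
  rmx' v t (1%:M : 'M[K]_n) = 0 /\
  (forall A : 'M[K]_n, A \in unitmx -> A != 1%:M -> 0 < rmx' v t A) /\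
  (forall A : 'M[K]_n, A \in unitmx -> rmx' v t (invmx A) = rmx' v t A) /\
  (forall A B : 'M[K]_n, A \in unitmx -> B \in unitmx ->
     rmx' v t (A *m B) <= Num.max (rmx' v t A) (rmx' v t B)) /\
  (* left-invariant ultrametric r'(B^-1 A) *)
  ultrametric_GL (fun A B : 'M[K]_n => rmx' v t (invmx B *m A)) /\
  (forall A B C : 'M[K]_n, A \in unitmx -> B \in unitmx -> C \in unitmx ->
     rmx' v t (invmx (C *m B) *m (C *m A)) = rmx' v t (invmx B *m A)) /\
  standard_topology_GL v (fun A B : 'M[K]_n => rmx' v t (invmx B *m A)) /\
  (* right-invariant ultrametric r'(A B^-1) *)
  ultrametric_GL (fun A B : 'M[K]_n => rmx' v t (A *m invmx B)) /\
  (forall A B C : 'M[K]_n, A \in unitmx -> B \in unitmx -> C \in unitmx ->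
     rmx' v t ((A *m C) *m invmx (B *m C)) = rmx' v t (A *m invmx B)) /\
  standard_topology_GL v (fun A B : 'M[K]_n => rmx' v t (A *m invmx B)) /\
  (* on GL(n, Z_p) *)
  (forall A B : 'M[K]_n, GLZp v A -> GLZp v B ->
     rmx' v t (invmx B *m A) = mxnorm v (A - B)).
Proof.
move=> Hp Hv; case: n => [|n'] hn ht1 htp; first by [].
split; first exact: (r'1 Hv n' ht1).
split; first by move=> A _ h; apply: (r'_gt0 Hv ht1).
split; first by move=> A _; apply: r'_inv.
split; first by move=> A B Au Bu; apply: (r'_mul Hp Hv htp).
split; first exact: (left_ultra Hp Hv n' ht1 htp).
split; first by move=> A B C Au Bu Cu; apply: left_inv.
split; first exact: (left_topo Hv ht1).
split; first exact: (right_ultra Hp Hv n' ht1 htp).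
split; first by move=> A B C Au Bu Cu; apply: right_inv.
split; first exact: (right_topo Hv ht1).
by move=> A B hA hB; apply: (glzp Hv ht1).
Qed.
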